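(* A downward-closed set system $\mathcal{S}=(E,\mathcal{I})$ is not a matroid if and only if there exist $I,J\in\mathcal{I}$ with the following three properties: (1) for every $K\in\mathcal{I}|_{I\cup J}$ with $|K|\ge|I|$ we have $K\supseteq I\setminus J$; (2) $|J\setminus I|\ge 1$; (3) $I$ is a maximum-cardinality element of $\mathcal{I}|_{I\cup J}$.
   Context: A set system $(E,\mathcal{I})$ consists of a finite set $E$ and $\mathcal{I}\subseteq 2^E$ with $\emptyset\in\mathcal{I}$. It is downward-closed if $B\in\mathcal{I}$ and $A\subseteq B$ imply $A\in\mathcal{I}$. It is a matroid if it is downward-closed and satisfies the exchange axiom: if $A,B\in\mathcal{I}$ and $|A|>|B|$ then there exists $x\in A\setminus B$ with $B\cup\{x\}\in\mathcal{I}$. For $S\subseteq E$, $\mathcal{I}|_S=\mathcal{I}\cap 2^S$. *)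

(* Defs.v *)
From mathcomp Require Import all_boot.
Set Implicit Arguments. Unset Strict Implicit. Unset Printing Implicit Defensive.

(* A set system on the finite ground set E = T (a finType), with family
   II : {set {set T}} of "independent" sets, containing the empty set. *)
Definition set_system (T : finType) (II : {set {set T}}) : Prop := set0 \in II.

Definition downward_closed (T : finType) (II : {set {set T}}) : Prop :=
  forall A B : {set T}, B \in II -> A \subset B -> A \in II.

Definition exchange_axiom (T : finType) (II : {set {set T}}) : Prop :=
  forall A B : {set T}, A \in II -> B \in II -> #|B| < #|A| ->
    exists2 x, x \in A :\: B & B :|: [set x] \in II.

Definition is_matroid (T : finType) (II : {set {set T}}) : Prop :=
  downward_closed II /\ exchange_axiom II.

Definition restrict (T : finType) (II : {set {set T}}) (S : {set T}) : {set {set T}} :=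
  [set K in II | K \subset S].

(* Main.v *)
Require Import Defs.
From mathcomp Require Import all_boot.
From Stdlib Require Import Classical_Prop.

Section S.
Variables (T : finType) (II : {set {set T}}).

Definition P (I J : {set T}) :=
  [/\ I \in II, J \in II,
      (forall K, K \in II -> K \subset I :|: J -> #|K| <= #|I|),
      #|J| < #|I| &
      (forall x, x \in I :\: J -> J :|: [set x] \notin II)].

Lemma good_ex (dc : downward_closed II) n : forall I J, #|I :|: J| <= n -> P I J ->
  exists I J : {set T}, [/\ I \in II, J \in II,
     (forall K, K \in restrict II (I :|: J) -> #|I| <= #|K| -> I :\: J \subset K),
     1 <= #|J :\: I| &
     (I \in restrict II (I :|: J) /\
      forall K, K \in restrict II (I :|: J) -> #|K| <= #|I|)].
Proof.
elim: n => [|n IH] I J Hn [HI HJ Hmax Hlt Hna].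
  move: Hn; rewrite leqn0 cards_eq0 => /eqP E.
  have : I \subset set0 by rewrite -E subsetUl.
  rewrite subset0 => /eqP EI; move: Hlt; rewrite EI cards0 //.
have H2 : 1 <= #|J :\: I|.
  rewrite card_gt0; apply/set0Pn.
  case: (boolP (J \subset I)) => sJI; last first.
    case/subsetPn: sJI => y yJ yI; exists y; rewrite inE yJ yI //.
  have : J \proper I by rewrite properEcard sJI Hlt.
  case/properP => _ [x xI xJ].
  have : J :|: [set x] \in II.
    apply: (dc _ _ HI); apply/subsetP => z; rewrite !inE => /orP [zJ|/eqP->//].
    exact: (subsetP sJI).
  by rewrite (negbTE (Hna x _)) // inE xJ xI.
case: (boolP [forall K in restrict II (I :|: J), (#|I| <= #|K|) ==> (I :\: J \subset K)]).
  move/forall_inP => H1; exists I, J; split => //.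
  - by move=> K KR le; exact: (implyP (H1 K KR) le).
  - split; first by rewrite inE HI subsetUl.
    by move=> K; rewrite inE => /andP [KI KS]; apply: Hmax.
move/forall_inPn => [K KR]; rewrite negb_imply => /andP [leK /subsetPn [y yIJ yK]].
move: KR; rewrite inE => /andP [KI KS].
have leK' : #|K| = #|I| by apply/eqP; rewrite eqn_leq leK Hmax.
apply: (IH K J).
  have sub : K :|: J \subset (I :|: J) :\ y.
    apply/subsetP => z; rewrite inE => /orP [zK|zJ]; rewrite in_setD1.
      rewrite (subsetP KS z zK) andbT; apply/eqP => E; by rewrite -E zK in yK.
    rewrite in_setU zJ orbT andbT; apply/eqP => E; move: yIJ; by rewrite -E inE zJ.
  have yIJ' : y \in I :|: J by move: yIJ; rewrite !inE => /andP [_ ->].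
  move: (subset_leq_card sub); rewrite (cardsD1 y (I :|: J)) yIJ' add1n in Hn.
  by move=> h; apply: leq_trans h _; rewrite -ltnS.
split => //.
- move=> K' K'I K'S; rewrite leK'; apply: Hmax => //.
  apply: subset_trans K'S _; by rewrite subUset KS subsetUr.
- by rewrite leK'.
- move=> x; rewrite inE => /andP [xJ xK]; apply: Hna.
  move: (subsetP KS x xK); rewrite !inE (negbTE xJ) orbF => xI; by rewrite xI.
Qed.
End S.

Theorem mainTheorem3 (T : finType) (II : {set {set T}}) :
  set_system II -> downward_closed II ->
  (~ is_matroid II <->
   exists I J : {set T}, [/\ I \in II, J \in II,
     (forall K, K \in restrict II (I :|: J) -> #|I| <= #|K| -> I :\: J \subset K),
     1 <= #|J :\: I| &
     (I \in restrict II (I :|: J) /\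
      forall K, K \in restrict II (I :|: J) -> #|K| <= #|I|)]).
Proof.
move=> ss dc; split.
  move=> nm.
  have : ~ exchange_axiom II by move=> ex; apply: nm.
  move=> nex.
  have [A [B [HA HB Hlt Hno]]] : exists A B, [/\ A \in II, B \in II, #|B| < #|A| &
      forall x, x \in A :\: B -> B :|: [set x] \notin II].
    apply: Classical_Prop.NNPP => hn; apply: nex => A B HA HB Hlt.
    apply: Classical_Prop.NNPP => hx; apply: hn; exists A, B; split => // x xD.
    apply/negP => h; apply: hx; by exists x.
  pose Q := fun K : {set T} => (K \in II) && (K \subset A :|: B).
  have Q0 : Q set0 by rewrite /Q ss sub0set.
  case: (@arg_maxnP _ set0 Q (fun K : {set T} => #|K|) Q0) => I /andP [HI IS] Imax.
  apply: (@good_ex T II dc #|I :|: B| I B (leqnn _)); split => //.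
  - move=> K KI KS; apply: Imax; rewrite /Q KI /=.
    apply: subset_trans KS _; by rewrite subUset IS subsetUr.
  - apply: leq_trans Hlt _; apply: Imax; by rewrite /Q HA subsetUl.
  - move=> x; rewrite inE => /andP [xB xI]; apply: Hno.
    move: (subsetP IS x xI); rewrite !inE (negbTE xB) orbF => xA; by rewrite xA.
case=> I [J [HI HJ H1 H2 [HIR H3]]] [_ ex].
pose Q := fun K : {set T} => (K \in II) && (J \subset K) && (K \subset I :|: J).
have QJ : Q J by rewrite /Q HJ subxx subsetUr.
case: (@arg_maxnP _ J Q (fun K : {set T} => #|K|) QJ) => K /andP [/andP [KI JK] KS] Kmax.
have KR : K \in restrict II (I :|: J) by rewrite inE KI KS.
have leIK : #|I| <= #|K|.
  rewrite leqNgt; apply/negP => lt.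
  case: (ex I K HI KI lt) => x; rewrite inE => /andP [xK xI] Kx.
  have : #|K :|: [set x]| <= #|K|.
    apply: Kmax; rewrite /Q Kx /= (subset_trans JK (subsetUl _ _)) /=.
    by rewrite subUset KS sub1set inE xI.
  by rewrite setUC cardsU1 xK add1n ltnn.
have sIK : I \proper K.
  apply/properP; split.
    apply/subsetP => z zI; case: (boolP (z \in J)) => zJ.
      exact: (subsetP JK).
    by apply: (subsetP (H1 K KR leIK)); rewrite inE zJ.
  move: H2; rewrite card_gt0 => /set0Pn [y]; rewrite inE => /andP [yI yJ].
  exists y => //; exact: (subsetP JK).
by move: (proper_card sIK); rewrite ltnNge H3.
Qed.
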